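(* Let $c>0$, $0<\delta<1$, $M\ge1$ and let $\chi:\mathbb R\to\mathbb R$ satisfy $\chi(t)=ct$ for every $t\ge-\delta$ and $\chi|_{(-\infty,0]}\in\widetilde{\mathcal W}^-\cup\mathcal W^+_M$. Let $g$ be a smooth function on $\mathbb R$ supported in $[-1,1]$ with $g(t)=g(-t)$, $0\le g\le1$, $\int_{\mathbb R}g=1$; put $g_\epsilon(t)=\epsilon^{-1}g(t/\epsilon)$ and $\chi_\epsilon=\chi*g_\epsilon$ for $\epsilon>0$. Then: (i) if $\chi|_{(-\infty,0]}\in\widetilde{\mathcal W}^-$, then $\chi_\epsilon|_{(-\infty,0]}\in\widetilde{\mathcal W}^-$ for every $0<\epsilon<\delta$, $\chi_\epsilon\searrow\chi$ as $\epsilon\searrow0$, and $\sup(\chi_\epsilon-\chi)\le c\epsilon$; (ii) if $\chi|_{(-\infty,0]}\in\mathcal W^+_M$ and $0<\epsilon<\delta^2/2$, then $\chi_\epsilon|_{(-\infty,0]}\in\mathcal W^+_{M/(1-\delta)}$; moreover, if $0<\epsilon<\delta^2/8$, then $\overline\chi_\epsilon:=\chi_\epsilon(\cdot+\epsilon)-c\epsilon$ satisfies $\overline\chi_\epsilon|_{(-\infty,0]}\in\mathcal W^+_{M/(1-\delta)^2}$ and $\overline\chi_\epsilon\ge\chi-c\epsilon$, and $\overline\chi_\epsilon\to\chi$ uniformly on compact subsets of $\mathbb R$ as $\epsilon\to0$.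
   Context: $\widetilde{\mathcal W}^-$: convex non-decreasing $\chi:\mathbb R_{\le0}\to\mathbb R_{\le0}$, $\chi(0)=0$, $\chi\not\equiv0$. $\mathcal W^+_M$: increasing concave $\chi:\mathbb R_{\le0}\to\mathbb R_{\le0}$, $\chi(0)=0$, $\chi<0$ on $(-\infty,0)$, $|t\chi'(t)|\le M|\chi(t)|$ for $t\le0$. *)

(* Defs.v *)
From Stdlib Require Import Reals Lra.
From Coquelicot Require Import Coquelicot.
Open Scope R_scope.

Definition conv (f h : R -> R) (t : R) : R :=
  RInt_gen (fun s => f (t - s) * h s) (Rbar_locally m_infty) (Rbar_locally p_infty).

Definition mollif (g : R -> R) (eps : R) (t : R) : R := / eps * g (t / eps).

Definition chi_eps (chi g : R -> R) (eps : R) : R -> R := conv chi (mollif g eps).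

Definition chibar_eps (chi g : R -> R) (c eps : R) (t : R) : R :=
  chi_eps chi g eps (t + eps) - c * eps.

(* The classes below are predicates on the restriction f|_{(-oo,0]}:
   they only mention values of f at points t <= 0. *)

Definition Wminus_tilde (f : R -> R) : Prop :=
  (forall x y l, x <= 0 -> y <= 0 -> 0 <= l <= 1 ->
     f (l * x + (1 - l) * y) <= l * f x + (1 - l) * f y) /\
  (forall x y, x <= y -> y <= 0 -> f x <= f y) /\
  (forall t, t <= 0 -> f t <= 0) /\
  f 0 = 0 /\
  (exists t, t <= 0 /\ f t <> 0).

(* W^+_M : increasing concave f : R_{<=0} -> R_{<=0}, f(0)=0, f<0 on (-oo,0),
   |t f'(t)| <= M |f(t)| for t <= 0 (at every t < 0 where f is differentiable;
   at t = 0 the left side vanishes). *)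
Definition Wplus (M : R) (f : R -> R) : Prop :=
  (forall x y, x < y -> y <= 0 -> f x < f y) /\
  (forall x y l, x <= 0 -> y <= 0 -> 0 <= l <= 1 ->
     l * f x + (1 - l) * f y <= f (l * x + (1 - l) * y)) /\
  (forall t, t <= 0 -> f t <= 0) /\
  f 0 = 0 /\
  (forall t, t < 0 -> f t < 0) /\
  (forall t d, t < 0 -> is_derive f t d -> Rabs (t * d) <= M * Rabs (f t)).

(* Main.v *)
From Stdlib Require Import Reals Lra.
From Coquelicot Require Import Coquelicot.

Require Import Defs.
Open Scope R_scope.

Definition cvx (f : R -> R) := forall x y l, 0 <= l <= 1 ->
  f (l * x + (1 - l) * y) <= l * f x + (1 - l) * f y.

Definition sl (f : R -> R) x y := (f y - f x) / (y - x).

Lemma div_le_cross a b c d : 0 < b -> 0 < d -> a * d <= c * b -> a / b <= c / d.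
Proof.
  intros Hb Hd H.
  replace (a / b) with ((a * d) * / (b * d)) by (field; lra).
  replace (c / d) with ((c * b) * / (b * d)) by (field; lra).
  apply Rmult_le_compat_r; [|exact H].
  apply Rlt_le, Rinv_0_lt_compat; nra.
Qed.

Lemma cvx_mid f x y z : cvx f -> x < y < z ->
  f y * (z - x) <= (z - y) * f x + (y - x) * f z.
Proof.
  intros Hf Hxyz.
  set (l := (z - y) / (z - x)).
  assert (Hl : 0 <= l <= 1).
  { unfold l; split.
    - apply Rmult_le_pos; [lra|]. apply Rlt_le, Rinv_0_lt_compat; lra.
    - apply Rmult_le_reg_r with (z - x); [lra|].
      unfold Rdiv; rewrite Rmult_assoc, Rinv_l; lra. }
  assert (Hy : l * x + (1 - l) * z = y) by (unfold l; field; lra).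
  pose proof (Hf x z l Hl) as H; rewrite Hy in H.
  assert (E : (l * f x + (1 - l) * f z) * (z - x) = (z - y) * f x + (y - x) * f z)
    by (unfold l; field; lra).
  rewrite <- E. apply Rmult_le_compat_r; lra.
Qed.

Lemma sl_le1 f x y z : cvx f -> x < y < z -> sl f x y <= sl f x z.
Proof.
  intros Hf H. pose proof (cvx_mid f x y z Hf H).
  unfold sl; apply div_le_cross; nra.
Qed.

Lemma sl_le2 f x y z : cvx f -> x < y < z -> sl f x z <= sl f y z.
Proof.
  intros Hf H. pose proof (cvx_mid f x y z Hf H).
  unfold sl; apply div_le_cross; nra.
Qed.

Lemma sl_sym f x y : sl f x y = sl f y x.
Proof.
  unfold sl. destruct (Req_dec x y) as [->|N].
  - reflexivity.
  - field; lra.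
Qed.

Lemma sl_mono f x y x' y' : cvx f -> x < y -> x' < y' -> x <= x' -> y <= y' ->
  sl f x y <= sl f x' y'.
Proof.
  intros Hf H1 H2 H3 H4.
  apply Rle_trans with (sl f x y').
  - destruct (Req_dec y y') as [->|N]; [lra|]. apply sl_le1; auto; lra.
  - destruct (Req_dec x x') as [->|N]; [lra|]. apply sl_le2; auto; lra.
Qed.

Lemma sl_eq f x y : x <> y -> f y = f x + sl f x y * (y - x).
Proof. intros N. unfold sl. field. lra. Qed.

Lemma cvx_lip f x : cvx f -> exists L, 0 <= L /\
  forall u v, x - 1 <= u <= x + 1 -> x - 1 <= v <= x + 1 -> Rabs (f u - f v) <= L * Rabs (u - v).
Proof.
  intros Hf.
  exists (Rabs (sl f (x-2) (x-1)) + Rabs (sl f (x+1) (x+2))).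
  split. { pose proof (Rabs_pos (sl f (x-2) (x-1))); pose proof (Rabs_pos (sl f (x+1) (x+2))); lra. }
  assert (K : forall u v, x - 1 <= u <= x + 1 -> x - 1 <= v <= x + 1 -> u < v ->
     Rabs (f u - f v) <= (Rabs (sl f (x-2) (x-1)) + Rabs (sl f (x+1) (x+2))) * Rabs (u - v)).
  { intros u v Hu Hv Huv.
    pose proof (sl_mono f (x-2) (x-1) u v Hf ltac:(lra) Huv ltac:(lra) ltac:(lra)) as A.
    pose proof (sl_mono f u v (x+1) (x+2) Hf Huv ltac:(lra) ltac:(lra) ltac:(lra)) as B.
    rewrite (sl_eq f u v) by lra.
    replace (f u - (f u + sl f u v * (v - u))) with (- (sl f u v * (v - u))) by ring.
    rewrite Rabs_Ropp, Rabs_mult, (Rabs_minus_sym u v).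
    apply Rmult_le_compat_r; [apply Rabs_pos|].
    pose proof (Rabs_pos (sl f (x-2) (x-1))); pose proof (Rabs_pos (sl f (x+1) (x+2))).
    pose proof (Rle_abs (sl f (x+1) (x+2))). pose proof (Rle_abs (- sl f (x-2) (x-1))).
    rewrite Rabs_Ropp in *.
    apply Rabs_le; lra. }
  intros u v Hu Hv. destruct (Rtotal_order u v) as [H|[H|H]].
  - apply K; auto.
  - subst. rewrite !Rminus_diag, Rabs_R0. lra.
  - rewrite Rabs_minus_sym, (Rabs_minus_sym u v). apply K; auto.
Qed.

Lemma lip_continuous f x L : 0 <= L ->
  (forall u, x - 1 <= u <= x + 1 -> Rabs (f u - f x) <= L * Rabs (u - x)) ->
  continuous f x.
Proof.
  intros HL H. apply filterlim_locally. intros eps.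
  assert (Hd : 0 < Rmin 1 (eps / (L + 1))).
  { apply Rmin_pos; [lra|]. apply Rdiv_lt_0_compat; [apply cond_pos|lra]. }
  exists (mkposreal _ Hd).
  intros y Hy. change (Rabs (y - x) < Rmin 1 (eps / (L + 1))) in Hy.
  change (Rabs (f y - f x) < eps).
  pose proof (Rmin_l 1 (eps / (L + 1))). pose proof (Rmin_r 1 (eps / (L + 1))).
  assert (Hy1 : Rabs (y - x) < 1) by lra.
  assert (Hy2 : Rabs (y - x) < eps / (L + 1)) by lra.
  apply Rabs_def2 in Hy1.
  pose proof (H y ltac:(lra)).
  pose proof (cond_pos eps).
  apply Rle_lt_trans with ((L+1) * Rabs (y - x)). { pose proof (Rabs_pos (y-x)); nra. }
  replace (pos eps) with ((L+1) * (eps / (L+1))) by (field; lra).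
  apply Rmult_lt_compat_l; lra.
Qed.

Lemma cvx_continuous f x : cvx f -> continuous f x.
Proof.
  intros Hf. destruct (cvx_lip f x Hf) as [L [HL H]].
  apply lip_continuous with L; auto. intros u Hu. apply H; lra.
Qed.

Lemma cont_lin (f : R -> R) a b s : (forall x, continuous f x) ->
  continuous (fun s => f (a - b * s)) s.
Proof.
  intros. apply (@continuous_comp R_UniformSpace R_UniformSpace R_UniformSpace (fun s => a - b*s) f).
  - apply (@ex_derive_continuous R_AbsRing R_NormedModule). auto_derive. auto.
  - auto.
Qed.

Lemma cont_linp (f : R -> R) a b s : (forall x, continuous f x) ->
  continuous (fun s => f (a + b * s)) s.
Proof.
  intros. apply (@continuous_comp R_UniformSpace R_UniformSpace R_UniformSpace (fun s => a + b*s) f).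
  - apply (@ex_derive_continuous R_AbsRing R_NormedModule). auto_derive. auto.
  - auto.
Qed.

Lemma cont_mult (f h : R -> R) x : continuous f x -> continuous h x ->
  continuous (fun s => f s * h s) x.
Proof. intros. apply (@continuous_mult R_UniformSpace R_AbsRing f h x); auto. Qed.

Lemma cont_comb (h1 h2 : R -> R) a b x : continuous h1 x -> continuous h2 x ->
  continuous (fun s => a * h1 s + b * h2 s) x.
Proof. intros. apply (@continuous_plus R_UniformSpace R_AbsRing R_NormedModule (fun s => a * h1 s) (fun s => b * h2 s));
 apply (@continuous_scal_r R_UniformSpace R_AbsRing R_NormedModule); auto. Qed.

Lemma cont_ex_RInt (h : R -> R) a b : (forall x, continuous h x) -> ex_RInt h a b.
Proof. intros. apply (@ex_RInt_continuous R_CompleteNormedModule). auto. Qed.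

Lemma is_RInt_gen_cpt (F : R -> R) A : 0 < A -> (forall x, continuous F x) ->
  (forall x, (x < -A \/ A < x) -> F x = 0) ->
  is_RInt_gen F (Rbar_locally m_infty) (Rbar_locally p_infty) (RInt F (-A) A).
Proof.
  intros HA Hc Hz P HP.
  apply Filter_prod with (Q := fun a => a < -A) (R := fun b => A < b).
  - exists (-A). auto.
  - exists A. auto.
  - intros a b Ha Hb. exists (RInt F (-A) A). split; [|apply locally_singleton; exact HP].
    simpl.
    assert (E : RInt F a b = RInt F (-A) A).
    { rewrite <- (RInt_Chasles F a (-A) b) by (apply cont_ex_RInt; auto).
      rewrite <- (RInt_Chasles F (-A) A b) by (apply cont_ex_RInt; auto).
      assert (E1 : RInt F a (-A) = 0).
      { rewrite (RInt_ext F (fun _ => 0)). rewrite RInt_const. change ((- A - a) * 0 = 0) || change ((b - A) * 0 = 0). ring.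
        intros x Hx. rewrite Rmin_left in Hx by lra. rewrite Rmax_right in Hx by lra.
        apply Hz. lra. }
      assert (E2 : RInt F A b = 0).
      { rewrite (RInt_ext F (fun _ => 0)). rewrite RInt_const. change ((- A - a) * 0 = 0) || change ((b - A) * 0 = 0). ring.
        intros x Hx. rewrite Rmin_left in Hx by lra. rewrite Rmax_right in Hx by lra.
        apply Hz. lra. }
      rewrite E1, E2. change (0 + (RInt F (-A) A + 0) = RInt F (-A) A). ring. }
    rewrite <- E. apply (@RInt_correct R_CompleteNormedModule). apply cont_ex_RInt; auto.
Qed.


Lemma sl_eq2 f x y : sl f x y * (y - x) = f y - f x \/ x = y.
Proof. destruct (Req_dec x y); [right; auto|left; unfold sl; field; lra]. Qed.

Lemma cvx_deriv_chord f t d h : cvx f -> is_derive f t d -> 0 < h ->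
  sl f (t - h) t <= d <= sl f t (t + h).
Proof.
  intros Hf Hd Hh. apply is_derive_Reals in Hd. split.
  - destruct (Rle_lt_dec (sl f (t - h) t) d) as [A|A]; auto. exfalso.
    destruct (Hd (sl f (t - h) t - d) ltac:(lra)) as [del Hdel].
    set (k := Rmin h del / 2).
    assert (Hk : 0 < k) by (unfold k; assert (0 < Rmin h del) by (apply Rmin_pos; [lra|apply cond_pos]); lra).
    assert (Hk1 : k < h) by (unfold k; pose proof (Rmin_l h del); lra).
    assert (Hk2 : k < del) by (unfold k; pose proof (Rmin_r h del); pose proof (cond_pos del); lra).
    specialize (Hdel (- k) ltac:(lra)).
    rewrite Rabs_Ropp, Rabs_right in Hdel by lra. specialize (Hdel Hk2).
    replace ((f (t + - k) - f t) / - k) with (sl f (t - k) t) in Hdel by (unfold sl; replace (t + - k) with (t - k) by ring; field; lra).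
    pose proof (sl_le2 f (t - h) (t - k) t Hf ltac:(lra)).
    apply Rabs_def2 in Hdel. lra.
  - destruct (Rle_lt_dec d (sl f t (t + h))) as [A|A]; auto. exfalso.
    destruct (Hd (d - sl f t (t + h)) ltac:(lra)) as [del Hdel].
    set (k := Rmin h del / 2).
    assert (Hk : 0 < k) by (unfold k; assert (0 < Rmin h del) by (apply Rmin_pos; [lra|apply cond_pos]); lra).
    assert (Hk1 : k < h) by (unfold k; pose proof (Rmin_l h del); lra).
    assert (Hk2 : k < del) by (unfold k; pose proof (Rmin_r h del); pose proof (cond_pos del); lra).
    specialize (Hdel k ltac:(lra)).
    rewrite Rabs_right in Hdel by lra. specialize (Hdel Hk2).
    replace ((f (t + k) - f t) / k) with (sl f t (t + k)) in Hdel by (unfold sl; field; lra).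
    pose proof (sl_le1 f t (t + k) (t + h) Hf ltac:(lra)).
    apply Rabs_def2 in Hdel. lra.
Qed.

Definition st := (R * R * R * R)%type.
Definition wid f (s : st) := let '(a, a', b', b) := s in sl f b' b - sl f a a'.
Definition okst (s : st) := let '(a, a', b', b) := s in a < a' < b' /\ b' < b.

Definition step f (s : st) : st :=
  let '(a, a', b', b) := s in
  let h := (b' - a') / 6 in
  if Rle_dec (sl f (a' + 2*h) (a' + 3*h) - sl f a' (a' + h))
             (sl f (a' + 5*h) b' - sl f (a' + 3*h) (a' + 4*h))
  then (a', a' + h, a' + 2*h, a' + 3*h)
  else (a' + 3*h, a' + 4*h, a' + 5*h, b').

Lemma step_ok f s : cvx f -> okst s ->
  okst (step f s) /\ wid f (step f s) <= wid f s / 2 /\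
  (let '(a, a', b', b) := s in let '(c, c', d', d) := step f s in
   a' < c' /\ d' < b' /\ d' - c' = (b' - a') / 6) /\ 0 <= wid f (step f s).
Proof.
  intros Hf. destruct s as [[[a a'] b'] b]. simpl. intros [[H1 H2] H3].
  set (h := (b' - a') / 6).
  assert (Hh : 0 < h) by (unfold h; lra).
  pose proof (sl_mono f a a' a' (a' + h) Hf ltac:(lra) ltac:(lra) ltac:(lra) ltac:(lra)) as M1.
  pose proof (sl_mono f a' (a' + h) (a' + 2*h) (a' + 3*h) Hf ltac:(lra) ltac:(lra) ltac:(lra) ltac:(lra)) as M2.
  pose proof (sl_mono f (a' + 2*h) (a' + 3*h) (a' + 3*h) (a' + 4*h) Hf ltac:(lra) ltac:(lra) ltac:(lra) ltac:(lra)) as M3.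
  pose proof (sl_mono f (a' + 3*h) (a' + 4*h) (a' + 5*h) b' Hf ltac:(lra) ltac:(unfold h; lra) ltac:(lra) ltac:(unfold h; lra)) as M4.
  pose proof (sl_mono f (a' + 5*h) b' b' b Hf ltac:(unfold h; lra) ltac:(lra) ltac:(unfold h; lra) ltac:(lra)) as M5.
  destruct (Rle_dec _ _) as [C|C]; simpl.
  - repeat split; unfold h in *; lra.
  - repeat split; unfold h in *; lra.
Qed.

Fixpoint iter_st f (s : st) (n : nat) : st :=
  match n with O => s | S n => step f (iter_st f s n) end.

Definition ap (s : st) := let '(a, a', b', b) := s in a'.
Definition bp (s : st) := let '(a, a', b', b) := s in b'.
Definition aa (s : st) := let '(a, a', b', b) := s in a.
Definition bb (s : st) := let '(a, a', b', b) := s in b.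

Lemma iter_props f s n : cvx f -> okst s ->
  okst (iter_st f s n) /\ wid f (iter_st f s n) <= wid f s / 2 ^ n /\
  ap (iter_st f s n) < ap (iter_st f s (S n)) /\ bp (iter_st f s (S n)) < bp (iter_st f s n).
Proof.
  intros Hf Hs. induction n as [|n IH].
  - simpl. destruct (step_ok f s Hf Hs) as [A [B [C D]]].
    destruct s as [[[a a'] b'] b]. destruct (step f (a, a', b', b)) as [[[c c'] d'] d].
    simpl in *. repeat split; try lra; tauto.
  - destruct IH as [A [B [C D]]].
    destruct (step_ok f _ Hf A) as [A1 [B1 [C1 D1]]].
    destruct (step_ok f _ Hf A1) as [A2 [B2 [C2 D2]]].
    simpl iter_st in *. split; [exact A1|]. split.
    + simpl pow. apply Rle_trans with (wid f (iter_st f s n) / 2); [exact B1|].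
      assert (0 < 2 ^ n) by (apply pow_lt; lra).
      unfold Rdiv. rewrite Rinv_mult. nra.
    + revert C2. destruct (step f (iter_st f s n)) as [[[a a'] b'] b].
      destruct (step f (a, a', b', b)) as [[[c c'] d'] d]. simpl. lra.
Qed.

Lemma ap_mono f s n m : cvx f -> okst s -> (n <= m)%nat -> ap (iter_st f s n) <= ap (iter_st f s m).
Proof.
  intros Hf Hs H. induction H; [lra|]. pose proof (iter_props f s m Hf Hs) as [_ [_ [C _]]]. lra.
Qed.

Lemma bp_mono f s n m : cvx f -> okst s -> (n <= m)%nat -> bp (iter_st f s m) <= bp (iter_st f s n).
Proof.
  intros Hf Hs H. induction H; [lra|]. pose proof (iter_props f s m Hf Hs) as [_ [_ [_ C]]]. lra.
Qed.

Lemma ap_bp f s n m : cvx f -> okst s -> ap (iter_st f s n) < bp (iter_st f s m).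
Proof.
  intros Hf Hs. destruct (Nat.le_ge_cases n m) as [H|H].
  - pose proof (ap_mono f s n m Hf Hs H). pose proof (iter_props f s m Hf Hs) as [A _].
    destruct (iter_st f s m) as [[[a a'] b'] b]. simpl in *. lra.
  - pose proof (bp_mono f s m n Hf Hs H). pose proof (iter_props f s n Hf Hs) as [A _].
    destruct (iter_st f s n) as [[[a a'] b'] b]. simpl in *. lra.
Qed.

Lemma chord_in f a a' b' b u v : cvx f -> a < a' -> b' < b -> a' <= u -> u < v -> v <= b' ->
  sl f a a' <= sl f u v <= sl f b' b.
Proof.
  intros Hf H1 H2 H3 H4 H5. split; apply sl_mono; auto; lra.
Qed.

Lemma cvx_diff_point f a b : cvx f -> a < b -> exists z D, a < z < b /\ is_derive f z D.
Proof.
  intros Hf Hab.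
  set (s0 := (a, a + (b - a) / 3, a + 2 * (b - a) / 3, b) : st).
  assert (Hs0 : okst s0) by (simpl; lra).
  set (w0 := wid f s0).
  set (E := fun x => exists n, x = ap (iter_st f s0 n)).
  assert (bE : bound E).
  { exists (bp s0). intros x [n ->]. pose proof (ap_bp f s0 n O Hf Hs0). exact (Rlt_le _ _ H). }
  destruct (completeness E bE (ex_intro _ _ (ex_intro _ O eq_refl))) as [z [Hz1 Hz2]].
  assert (Za : forall n, ap (iter_st f s0 n) < z).
  { intros n. pose proof (iter_props f s0 n Hf Hs0) as [_ [_ [C _]]].
    assert (ap (iter_st f s0 (S n)) <= z) by (apply Hz1; exists (S n); auto). lra. }
  assert (Zb : forall n, z < bp (iter_st f s0 n)).
  { intros n. pose proof (iter_props f s0 n Hf Hs0) as [_ [_ [_ C]]].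
    assert (z <= bp (iter_st f s0 (S n))).
    { apply Hz2. intros x [m ->]. apply Rlt_le, ap_bp; auto. }
    lra. }
  set (Lw := fun n => let '(a, a', b', b) := iter_st f s0 n in sl f a a').
  set (Uw := fun n => let '(a, a', b', b) := iter_st f s0 n in sl f b' b).
  assert (LU : forall n m, Lw n <= Uw m).
  { intros n m. set (k := Nat.max n m).
    pose proof (ap_mono f s0 n k Hf Hs0 (Nat.le_max_l n m)) as P1.
    pose proof (bp_mono f s0 n k Hf Hs0 (Nat.le_max_l n m)) as P2.
    pose proof (ap_mono f s0 m k Hf Hs0 (Nat.le_max_r n m)) as P3.
    pose proof (bp_mono f s0 m k Hf Hs0 (Nat.le_max_r n m)) as P4.
    pose proof (iter_props f s0 n Hf Hs0) as [On _].
    pose proof (iter_props f s0 m Hf Hs0) as [Om _].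
    pose proof (iter_props f s0 k Hf Hs0) as [Ok _].
    unfold Lw, Uw. fold k in P1, P2, P3, P4.
    destruct (iter_st f s0 n) as [[[a1 a1'] b1'] b1].
    destruct (iter_st f s0 m) as [[[a2 a2'] b2'] b2].
    destruct (iter_st f s0 k) as [[[a3 a3'] b3'] b3]. simpl in *.
    pose proof (chord_in f a1 a1' b1' b1 a3' b3' Hf ltac:(lra) ltac:(lra) ltac:(lra) ltac:(lra) ltac:(lra)).
    pose proof (chord_in f a2 a2' b2' b2 a3' b3' Hf ltac:(lra) ltac:(lra) ltac:(lra) ltac:(lra) ltac:(lra)).
    lra. }
  set (EL := fun x => exists n, x = Lw n).
  assert (bEL : bound EL) by (exists (Uw O); intros x [n ->]; apply LU).
  destruct (completeness EL bEL (ex_intro _ _ (ex_intro _ O eq_refl))) as [D [HD1 HD2]].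
  assert (DL : forall n, Lw n <= D) by (intros n; apply HD1; exists n; auto).
  assert (DU : forall n, D <= Uw n) by (intros n; apply HD2; intros x [m ->]; apply LU).
  assert (W : forall n, Uw n - Lw n <= w0 / 2 ^ n).
  { intros n. pose proof (iter_props f s0 n Hf Hs0) as [_ [B _]]. unfold Uw, Lw, w0.
    destruct (iter_st f s0 n) as [[[a1 a1'] b1'] b1]. simpl in *. exact B. }
  exists z, D. split.
  { pose proof (Za O). pose proof (Zb O). simpl in *. lra. }
  apply is_derive_Reals. intros eps Heps.
  assert (Hw0 : 0 <= w0).
  { pose proof (LU O O). unfold w0. unfold Lw, Uw in H. simpl in *. lra. }
  destruct (pow_lt_1_zero (/2) ltac:(rewrite Rabs_right; lra) (eps / (w0 + 1)) ltac:(apply Rdiv_lt_0_compat; lra)) as [N HN].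
  specialize (HN N (le_n N)). rewrite Rabs_right in HN by (apply Rle_ge, pow_le; lra).
  assert (Wn : Uw N - Lw N < eps).
  { eapply Rle_lt_trans; [apply W|].
    rewrite <- Rinv_pow in HN by lra.
    assert (P : 0 < / 2 ^ N) by (apply Rinv_0_lt_compat, pow_lt; lra).
    apply Rle_lt_trans with ((w0 + 1) * / 2 ^ N). { unfold Rdiv. nra. }
    replace eps with ((w0 + 1) * (eps / (w0 + 1))) by (field; lra).
    apply Rmult_lt_compat_l; lra. }
  pose proof (Za N) as ZaN. pose proof (Zb N) as ZbN.
  assert (Hdel : 0 < Rmin (z - ap (iter_st f s0 N)) (bp (iter_st f s0 N) - z)) by (apply Rmin_pos; lra).
  exists (mkposreal _ Hdel). intros h Hh0 Hh. simpl in Hh.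
  pose proof (Rmin_l (z - ap (iter_st f s0 N)) (bp (iter_st f s0 N) - z)).
  pose proof (Rmin_r (z - ap (iter_st f s0 N)) (bp (iter_st f s0 N) - z)).
  apply Rabs_def2 in Hh.
  pose proof (DL N). pose proof (DU N).
  pose proof (iter_props f s0 N Hf Hs0) as [ON _].
  unfold Lw, Uw in *. revert ZaN ZbN H H0 Hh ON H1 H2 Wn.
  destruct (iter_st f s0 N) as [[[a1 a1'] b1'] b1]. simpl. intros.
  destruct (Rlt_dec 0 h).
  - pose proof (chord_in f a1 a1' b1' b1 z (z + h) Hf ltac:(lra) ltac:(lra) ltac:(lra) ltac:(lra) ltac:(lra)).
    replace ((f (z + h) - f z) / h) with (sl f z (z + h)) by (unfold sl; field; lra).
    apply Rabs_def1; lra.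
  - pose proof (chord_in f a1 a1' b1' b1 (z + h) z Hf ltac:(lra) ltac:(lra) ltac:(lra) ltac:(lra) ltac:(lra)).
    replace ((f (z + h) - f z) / h) with (sl f (z + h) z) by (unfold sl; field; lra).
    apply Rabs_def1; lra.
Qed.

Lemma mid_cvx f : (forall x y z, x < y < z -> f y * (z - x) <= (z - y) * f x + (y - x) * f z) -> cvx f.
Proof.
  intros H x y l Hl.
  destruct (Req_dec l 0) as [->|N0]. { replace (0 * x + (1 - 0) * y) with y by ring. lra. }
  destruct (Req_dec l 1) as [->|N1]. { replace (1 * x + (1 - 1) * y) with x by ring. lra. }
  destruct (Rtotal_order x y) as [Hxy|[Hxy|Hxy]].
  - set (p := l * x + (1 - l) * y).
    assert (Hp : x < p < y) by (unfold p; split; nra).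
    specialize (H x p y Hp).
    replace (y - p) with (l * (y - x)) in H by (unfold p; ring).
    replace (p - x) with ((1 - l) * (y - x)) in H by (unfold p; ring).
    apply Rmult_le_reg_r with (y - x); [lra|]. nra.
  - subst. replace (l * y + (1 - l) * y) with y by ring. lra.
  - set (p := l * x + (1 - l) * y).
    assert (Hp : y < p < x) by (unfold p; split; nra).
    specialize (H y p x Hp).
    replace (x - p) with ((1 - l) * (x - y)) in H by (unfold p; ring).
    replace (p - y) with (l * (x - y)) in H by (unfold p; ring).
    apply Rmult_le_reg_r with (x - y); [lra|]. nra.
Qed.

Lemma cvx_mid_gen f x y z : (forall l, 0 <= l <= 1 -> f (l * x + (1 - l) * z) <= l * f x + (1 - l) * f z) ->
  x < y < z -> f y * (z - x) <= (z - y) * f x + (y - x) * f z.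
Proof.
  intros Hf Hxyz.
  set (l := (z - y) / (z - x)).
  assert (Hl : 0 <= l <= 1).
  { unfold l; split.
    - apply Rmult_le_pos; [lra|]. apply Rlt_le, Rinv_0_lt_compat; lra.
    - apply Rmult_le_reg_r with (z - x); [lra|].
      unfold Rdiv; rewrite Rmult_assoc, Rinv_l; lra. }
  assert (Hy : l * x + (1 - l) * z = y) by (unfold l; field; lra).
  pose proof (Hf l Hl) as H; rewrite Hy in H.
  assert (E : (l * f x + (1 - l) * f z) * (z - x) = (z - y) * f x + (y - x) * f z)
    by (unfold l; field; lra).
  rewrite <- E. apply Rmult_le_compat_r; lra.
Qed.

Lemma glue f c d : 0 < d ->
  (forall x y l, x <= 0 -> y <= 0 -> 0 <= l <= 1 -> f (l * x + (1 - l) * y) <= l * f x + (1 - l) * f y) ->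
  (forall t, -d <= t -> f t = c * t) -> cvx f.
Proof.
  intros Hd H1 H2. apply mid_cvx.
  assert (mid0 : forall x y z, x < y < z -> z <= 0 -> f y * (z - x) <= (z - y) * f x + (y - x) * f z).
  { intros x y z Hxyz Hz. apply cvx_mid_gen; auto. intros l Hl. apply H1; auto; lra. }
  assert (f0 : f 0 = 0) by (rewrite H2; lra).
  assert (LB : forall x, x < -d -> c * x <= f x).
  { intros x Hx. pose proof (mid0 x (-d/2) 0 ltac:(lra) ltac:(lra)) as M.
    rewrite f0, (H2 (-d/2)) in M by lra. nra. }
  assert (CA : forall x y, x < y -> y <= 0 -> f y - f x <= c * (y - x)).
  { intros x y Hxy Hy. destruct (Rle_lt_dec (-d) x) as [Hx|Hx].
    - rewrite !H2 by lra. lra.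
    - pose proof (LB x Hx).
      destruct (Req_dec y 0) as [->|Ny]. { rewrite f0. lra. }
      pose proof (mid0 x y 0 ltac:(lra) ltac:(lra)) as M. rewrite f0 in M.
      apply Rmult_le_reg_r with (- x); [lra|]. nra. }
  intros x y z Hxyz.
  destruct (Rle_lt_dec z 0) as [Hz|Hz]; [apply mid0; auto|].
  destruct (Rle_lt_dec (-d) x) as [Hx|Hx]. { rewrite !H2 by lra. nra. }
  rewrite (H2 z) by lra.
  destruct (Rtotal_order y 0) as [Hy|[Hy|Hy]].
  - pose proof (mid0 x y 0 ltac:(lra) ltac:(lra)) as M. rewrite f0 in M.
    pose proof (CA x y ltac:(lra) ltac:(lra)). nra.
  - subst. rewrite f0. pose proof (CA x 0 ltac:(lra) ltac:(lra)). rewrite f0 in H. nra.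
  - rewrite (H2 y) by lra. pose proof (CA x 0 ltac:(lra) ltac:(lra)). rewrite f0 in H. nra.
Qed.

Section G.
Variable g : R -> R.
Hypothesis gcont : forall x, continuous g x.
Hypothesis gsupp : forall t, (t < -1 \/ 1 < t) -> g t = 0.
Hypothesis gsym : forall t, g t = g (- t).
Hypothesis gpos : forall t, 0 <= g t.
Hypothesis gint : RInt g (-1) 1 = 1.

Definition Ig (h : R -> R) : R := RInt (fun s => h s * g s) (-1) 1.

Lemma ex_hg h : (forall x, continuous h x) -> ex_RInt (fun s => h s * g s) (-1) 1.
Proof. intros. apply cont_ex_RInt. intros. apply cont_mult; auto. Qed.

Lemma Ig_ext h1 h2 : (forall s, -1 < s < 1 -> h1 s = h2 s) -> Ig h1 = Ig h2.
Proof.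
  intros H. unfold Ig. apply RInt_ext. intros x Hx.
  rewrite Rmin_left in Hx by lra. rewrite Rmax_right in Hx by lra. rewrite H; auto.
Qed.

Lemma Ig_le h1 h2 : (forall x, continuous h1 x) -> (forall x, continuous h2 x) ->
  (forall s, -1 < s < 1 -> h1 s <= h2 s) -> Ig h1 <= Ig h2.
Proof.
  intros C1 C2 H. unfold Ig. apply RInt_le; try lra; try apply ex_hg; auto.
  intros x Hx. apply Rmult_le_compat_r; auto.
Qed.

Lemma Ig_lin a b h1 h2 : (forall x, continuous h1 x) -> (forall x, continuous h2 x) ->
  Ig (fun s => a * h1 s + b * h2 s) = a * Ig h1 + b * Ig h2.
Proof.
  intros C1 C2. unfold Ig.
  rewrite (RInt_ext _ (fun s => plus (scal a (h1 s * g s)) (scal b (h2 s * g s)))).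
  2:{ intros. change ((a * h1 x + b * h2 x) * g x = a * (h1 x * g x) + b * (h2 x * g x)). ring. }
  rewrite (@RInt_plus R_CompleteNormedModule).
  - rewrite !(@RInt_scal R_CompleteNormedModule) by (apply ex_hg; auto). reflexivity.
  - apply (@ex_RInt_scal R_CompleteNormedModule). apply ex_hg; auto.
  - apply (@ex_RInt_scal R_CompleteNormedModule). apply ex_hg; auto.
Qed.

Lemma Ig_const c : Ig (fun _ => c) = c.
Proof.
  unfold Ig. rewrite (RInt_ext _ (fun s => scal c (g s))).
  2:{ intros. change (c * g x = c * g x). ring. }
  rewrite (@RInt_scal R_CompleteNormedModule). rewrite gint. change (c * 1 = c). ring.
  apply cont_ex_RInt; auto.
Qed.

Lemma Ig_sym h : (forall x, continuous h x) -> Ig h = Ig (fun s => h (- s)).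
Proof.
  intros C. unfold Ig.
  assert (E := (@RInt_comp_lin R_CompleteNormedModule) (fun s => h s * g s) (-1) 0 (-1) 1).
  rewrite (RInt_ext (fun s => h (- s) * g s) (fun y => opp (scal (-1) ((fun s => h s * g s) (-1 * y + 0))))).
  2:{ intros x _. change (h (- x) * g x = - (-1 * (h (-1 * x + 0) * g (-1 * x + 0)))).
      replace (-1 * x + 0) with (- x) by ring. rewrite <- gsym. ring. }
  rewrite (@RInt_opp R_CompleteNormedModule).
  2:{ apply (@ex_RInt_scal R_CompleteNormedModule). apply cont_ex_RInt. intros. apply cont_mult.
      - apply (cont_lin h 0 1 x) in C. eapply continuous_ext; [|exact C]. intros; simpl; f_equal; ring.
      - apply (cont_lin g 0 1 x) in gcont. eapply continuous_ext; [|exact gcont]. intros; simpl; f_equal; ring. }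
  replace (-1 * -1 + 0) with 1 in E by ring. replace (-1 * 1 + 0) with (-1) in E by ring.
  pose proof (E (ex_RInt_swap _ _ _ (ex_hg h C))) as E3.
  transitivity (opp (RInt (fun s => h s * g s) 1 (-1))).
  - rewrite <- (@opp_RInt_swap R_CompleteNormedModule) by (apply ex_RInt_swap, ex_hg; auto).
    reflexivity.
  - apply f_equal. symmetry. exact E3.
Qed.

Lemma Ig_id : Ig (fun s => s) = 0.
Proof.
  assert (C : forall x, continuous (fun s : R => s) x) by (intros; apply continuous_id).
  pose proof (Ig_sym (fun s => s) C) as E.
  assert (E2 : Ig (fun s => - s) = -1 * Ig (fun s => s) + 0 * Ig (fun s => s)).
  { rewrite <- Ig_lin by auto. apply Ig_ext. intros; ring. }
  change (Ig (fun s => s) = Ig (fun s => - s)) in E. lra.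
Qed.

Definition Gm (f : R -> R) e t := Ig (fun s => f (t - e * s)).

Lemma Gm_rep f e t : (forall x, continuous f x) -> 0 < e -> chi_eps f g e t = Gm f e t.
Proof.
  intros Cf He. unfold chi_eps, conv, Gm, Ig.
  set (F := fun s => f (t - s) * mollif g e s).
  assert (CF : forall x, continuous F x).
  { intros x. unfold F, mollif. apply cont_mult.
    - apply (cont_lin f t 1 x) in Cf. eapply continuous_ext; [|exact Cf]. intros; simpl; f_equal; ring.
    - apply cont_mult. apply continuous_const.
      apply (cont_lin g 0 (- / e) x) in gcont. eapply continuous_ext; [|exact gcont].
      intros; simpl; f_equal; unfold Rdiv; ring. }
  rewrite (is_RInt_gen_unique F (RInt F (-e) e)).
  2:{ apply is_RInt_gen_cpt; auto. intros x Hx. unfold F, mollif. rewrite gsupp. ring.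
      destruct Hx as [Hx|Hx]; [left|right].
      - apply Rmult_lt_reg_r with e; auto. unfold Rdiv. rewrite Rmult_assoc, Rinv_l; lra.
      - apply Rmult_lt_reg_r with e; auto. unfold Rdiv. rewrite Rmult_assoc, Rinv_l; lra. }
  assert (E := (@RInt_comp_lin R_CompleteNormedModule) F e 0 (-1) 1).
  replace (e * -1 + 0) with (-e) in E by ring. replace (e * 1 + 0) with e in E by ring.
  rewrite <- E by (apply cont_ex_RInt; auto).
  apply RInt_ext. intros x _. unfold F, mollif. change (e * (f (t - (e * x + 0)) * (/ e * g ((e * x + 0) / e))) = f (t - e * x) * g x).
  replace ((e * x + 0) / e) with x by (field; lra). replace (e * x + 0) with (e * x) by ring.
  field. lra.
Qed.


Lemma Gm_lin f c d e t : (forall u, -d <= u -> f u = c * u) -> 0 <= e -> -d <= t - e ->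
  Gm f e t = c * t.
Proof.
  intros Hf He Ht. unfold Gm.
  rewrite (Ig_ext _ (fun s => (c * t) * 1 + (- c * e) * s)).
  - rewrite Ig_lin; [|intros; apply continuous_const|intros; apply continuous_id].
    change (c * t * Ig (fun _ => 1) + - c * e * Ig (fun s => s) = c * t).
    rewrite Ig_const, Ig_id. ring.
  - intros s Hs. rewrite Hf by nra. ring.
Qed.

Lemma Gm_le (f1 f2 : R -> R) (e t1 t2 : R) : (forall x, continuous f1 x) -> (forall x, continuous f2 x) ->
  (forall s, -1 < s < 1 -> f1 (t1 - e * s) <= f2 (t2 - e * s)) -> Gm f1 e t1 <= Gm f2 e t2.
Proof. intros C1 C2 H. unfold Gm. apply Ig_le; auto; intros; apply cont_lin; auto. Qed.

Lemma Gm_cvx (f : R -> R) (e : R) : (forall x, continuous f x) -> cvx f -> cvx (Gm f e).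
Proof.
  intros Cf Hf x y l Hl. unfold Gm.
  rewrite <- Ig_lin by (intros; apply cont_lin; auto).
  apply Ig_le.
  - intros; apply cont_lin; auto.
  - intros z. apply cont_comb; apply cont_lin; auto.
  - intros s _. replace (l * x + (1 - l) * y - e * s) with (l * (x - e * s) + (1 - l) * (y - e * s)) by ring.
    apply Hf; auto.
Qed.

Lemma Gm_sym (f : R -> R) (e t : R) : (forall x, continuous f x) ->
  Gm f e t = Ig (fun s => / 2 * f (t - e * s) + / 2 * f (t + e * s)).
Proof.
  intros Cf. rewrite Ig_lin by (intros; first [apply cont_lin; auto | apply cont_linp; auto]).
  unfold Gm. rewrite (Ig_sym (fun s => f (t - e * s))) at 2 by (intros; apply cont_lin; auto).
  rewrite (Ig_ext (fun s => f (t - e * - s)) (fun s => f (t + e * s))) by (intros; f_equal; ring).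
  rewrite (Ig_sym (fun s => f (t - e * s))) at 1 by (intros; apply cont_lin; auto).
  rewrite (Ig_ext (fun s => f (t - e * - s)) (fun s => f (t + e * s))) by (intros; f_equal; ring).
  assert (HH : forall X : R, X = /2*X + /2*X) by (intros; field). apply HH.
Qed.

Lemma cvx_half f x y : cvx f -> f (/2 * x + /2 * y) <= /2 * f x + /2 * f y.
Proof.
  intros Hf. replace (/2) with (1 - /2) at 2 4 by field. apply Hf. lra.
Qed.

Lemma Gm_jensen (f : R -> R) (e t : R) : (forall x, continuous f x) -> cvx f -> f t <= Gm f e t.
Proof.
  intros Cf Hf. rewrite Gm_sym by auto. rewrite <- (Ig_const (f t)) at 1.
  apply Ig_le.
  - intros; apply continuous_const.
  - intros; apply cont_comb; [apply cont_lin|apply cont_linp]; auto.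
  - intros s _. pose proof (cvx_half f (t - e * s) (t + e * s) Hf) as H.
    replace (/ 2 * (t - e * s) + / 2 * (t + e * s)) with t in H by field. exact H.
Qed.

Lemma cvx_sym_mono f t a b : cvx f -> Rabs a <= Rabs b ->
  f (t - a) + f (t + a) <= f (t - b) + f (t + b).
Proof.
  intros Hf Hab.
  assert (K : forall b', 0 < b' -> -b' <= a <= b' -> f (t - a) + f (t + a) <= f (t - b') + f (t + b')).
  { intros b' Hb Ha. set (l := (b' + a) / (2 * b')).
    assert (Hl : 0 <= l <= 1).
    { unfold l. split.
      - apply Rmult_le_pos; [lra|]. apply Rlt_le, Rinv_0_lt_compat; lra.
      - apply Rmult_le_reg_r with (2 * b'); [lra|].
        unfold Rdiv; rewrite Rmult_assoc, Rinv_l; lra. }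
    pose proof (Hf (t - b') (t + b') l Hl) as H1.
    pose proof (Hf (t - b') (t + b') (1 - l) ltac:(lra)) as H2.
    replace (l * (t - b') + (1 - l) * (t + b')) with (t - a) in H1 by (unfold l; field; lra).
    replace ((1 - l) * (t - b') + (1 - (1 - l)) * (t + b')) with (t + a) in H2 by (unfold l; field; lra).
    lra. }
  destruct (Rle_lt_dec (Rabs b) 0) as [Hb|Hb].
  - assert (Rabs a = 0) by (pose proof (Rabs_pos a); lra).
    assert (a = 0) by (destruct (Req_dec a 0); auto; apply Rabs_no_R0 in H0; lra).
    assert (b = 0) by (destruct (Req_dec b 0); auto; apply Rabs_no_R0 in H1; pose proof (Rabs_pos b); lra).
    subst. lra.
  - apply Rabs_le_between in Hab. 
    destruct (Rle_dec 0 b).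
    + rewrite Rabs_right in * by lra. apply K; lra.
    + rewrite Rabs_left in * by lra. 
      replace (t - b) with (t + - b) by ring. replace (t + b) with (t - - b) by ring.
      rewrite (Rplus_comm (f (t + - b))). apply K; lra.
Qed.

Lemma Gm_mono_e (f : R -> R) (e1 e2 t : R) : (forall x, continuous f x) -> cvx f -> 0 <= e1 <= e2 ->
  Gm f e1 t <= Gm f e2 t.
Proof.
  intros Cf Hf He. rewrite !Gm_sym by auto. apply Ig_le.
  - intros; apply cont_comb; [apply cont_lin|apply cont_linp]; auto.
  - intros; apply cont_comb; [apply cont_lin|apply cont_linp]; auto.
  - intros s Hs. pose proof (cvx_sym_mono f t (e1 * s) (e2 * s) Hf) as H.
    assert (Rabs (e1 * s) <= Rabs (e2 * s)).
    { rewrite !Rabs_mult. apply Rmult_le_compat_r; [apply Rabs_pos|].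
      rewrite !Rabs_right by lra. lra. }
    specialize (H H0). lra.
Qed.

Lemma Gm_opp (f : R -> R) (e t : R) : (forall x, continuous f x) -> Gm (fun x => - f x) e t = - Gm f e t.
Proof.
  intros Cf. unfold Gm.
  rewrite (Ig_ext (fun s => - f (t - e * s)) (fun s => (-1) * f (t - e * s) + 0 * f (t - e * s))) by (intros; ring).
  rewrite Ig_lin by (intros; apply cont_lin; auto). ring.
Qed.

Lemma Gm_near (f : R -> R) (e t L : R) : (forall x, continuous f x) ->
  (forall s, -1 <= s <= 1 -> Rabs (f (t - e * s) - f t) <= L) -> Rabs (Gm f e t - f t) <= L.
Proof.
  intros Cf H. apply Rabs_le.
  assert (A : Ig (fun _ => f t - L) <= Gm f e t).
  { apply Ig_le; [intros; apply continuous_const| intros; apply cont_lin; auto|].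
    intros s Hs. specialize (H s ltac:(lra)). apply Rabs_le_between in H. lra. }
  assert (B : Gm f e t <= Ig (fun _ => f t + L)).
  { apply Ig_le; [intros; apply cont_lin; auto| intros; apply continuous_const|].
    intros s Hs. specialize (H s ltac:(lra)). apply Rabs_le_between in H. lra. }
  rewrite Ig_const in A, B. lra.
Qed.

Lemma Ig_sub_le h1 h2 k : (forall x, continuous h1 x) -> (forall x, continuous h2 x) ->
  (forall x, continuous k x) -> (forall s, -1 < s < 1 -> h1 s - h2 s <= k s) -> Ig h1 - Ig h2 <= Ig k.
Proof.
  intros C1 C2 C3 H.
  replace (Ig h1 - Ig h2) with (1 * Ig h1 + (-1) * Ig h2) by ring.
  rewrite <- Ig_lin by auto. apply Ig_le; auto.
  - intros; apply cont_comb; auto.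
  - intros s Hs. specialize (H s Hs). lra.
Qed.

Lemma Ig_sub_ge h1 h2 k : (forall x, continuous h1 x) -> (forall x, continuous h2 x) ->
  (forall x, continuous k x) -> (forall s, -1 < s < 1 -> k s <= h1 s - h2 s) -> Ig k <= Ig h1 - Ig h2.
Proof.
  intros C1 C2 C3 H.
  replace (Ig h1 - Ig h2) with (1 * Ig h1 + (-1) * Ig h2) by ring.
  rewrite <- Ig_lin by auto. apply Ig_le; auto.
  - intros; apply cont_comb; auto.
  - intros s Hs. specialize (H s Hs). lra.
Qed.

Lemma Gm_diff_le (f : R -> R) (e x y K : R) : (forall z, continuous f z) ->
  (forall s, -1 < s < 1 -> f (y - e * s) - f (x - e * s) <= K) -> Gm f e y - Gm f e x <= K.
Proof.
  intros Cf H. unfold Gm. rewrite <- (Ig_const K). apply Ig_sub_le; auto.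
  - intros; apply cont_lin; auto.
  - intros; apply cont_lin; auto.
  - intros; apply continuous_const.
Qed.

Lemma Gm_diff_ge (f : R -> R) (e x y K : R) : (forall z, continuous f z) ->
  (forall s, -1 < s < 1 -> K <= f (y - e * s) - f (x - e * s)) -> K <= Gm f e y - Gm f e x.
Proof.
  intros Cf H. unfold Gm. rewrite <- (Ig_const K). apply Ig_sub_ge; auto.
  - intros; apply cont_lin; auto.
  - intros; apply cont_lin; auto.
  - intros; apply continuous_const.
Qed.

Lemma Gm_ext (f1 f2 : R -> R) e t : (forall x, f1 x = f2 x) -> Gm f1 e t = Gm f2 e t.
Proof. intros H. unfold Gm. apply Ig_ext. intros; apply H. Qed.

Lemma part_i (c d : R) (chi : R -> R) : 0 < c -> 0 < d < 1 ->
  (forall t, - d <= t -> chi t = c * t) -> Wminus_tilde chi ->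
     (forall eps, 0 < eps < d -> Wminus_tilde (chi_eps chi g eps)) /\
     (forall e1 e2 t, 0 < e1 -> e1 <= e2 -> e2 < d ->
        chi_eps chi g e1 t <= chi_eps chi g e2 t) /\
     (forall t, filterlim (fun eps => chi_eps chi g eps t) (at_right 0) (locally (chi t))) /\
     (forall eps, 0 < eps < d -> forall t, chi_eps chi g eps t - chi t <= c * eps).
Proof.
  intros Hc Hd Hlin [Hcv [Hmon [Hneg [H0 Hex]]]].
  assert (Cx : cvx chi) by (apply glue with c d; auto; lra).
  assert (Cc : forall x, continuous chi x) by (intros; apply cvx_continuous; auto).
  assert (rep : forall e t, 0 < e -> chi_eps chi g e t = Gm chi e t) by (intros; apply Gm_rep; auto).
  assert (SL : forall x y, x <= y -> 0 <= chi y - chi x <= c * (y - x)).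
  { intros x y Hxy. destruct (Req_dec x y) as [->|N]; [lra|]. split.
    - destruct (Rle_lt_dec y 0) as [Hy|Hy]. { pose proof (Hmon x y Hxy Hy); lra. }
      destruct (Rle_lt_dec (-d) x) as [Hx|Hx]. { rewrite !Hlin by lra. nra. }
      pose proof (Hmon x 0 ltac:(lra) ltac:(lra)). rewrite (Hlin y) by lra. nra.
    - set (K := Rabs x + 1).
      assert (Kx : x + K >= 1) by (unfold K; pose proof (Rle_abs (-x)); rewrite Rabs_Ropp in *; lra).
      pose proof (sl_mono chi x y (x + K) (y + K) Cx ltac:(lra) ltac:(lra) ltac:(unfold K; pose proof (Rabs_pos x); lra) ltac:(unfold K; pose proof (Rabs_pos x); lra)) as S.
      unfold sl in S. rewrite !(Hlin (_ + K)) in S by lra.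
      replace ((c * (y + K) - c * (x + K)) / (y + K - (x + K))) with c in S by (field; lra).
      apply Rmult_le_compat_r with (r := y - x) in S; [|lra].
      replace ((chi y - chi x) / (y - x) * (y - x)) with (chi y - chi x) in S by (field; lra). lra. }
  assert (NEAR : forall e t, 0 < e -> Rabs (Gm chi e t - chi t) <= c * e).
  { intros e t He. apply Gm_near; auto. intros s Hs.
    destruct (Rle_lt_dec 0 s) as [Hs0|Hs0].
    - pose proof (SL (t - e * s) t ltac:(nra)). rewrite Rabs_left1 by lra.
      assert (c * (e * s) <= c * e) by (apply Rmult_le_compat_l; nra).
      replace (t - (t - e * s)) with (e * s) in H by ring. lra.
    - pose proof (SL t (t - e * s) ltac:(nra)). rewrite Rabs_right by lra.
      assert (c * (- (e * s)) <= c * e) by (apply Rmult_le_compat_l; nra).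
      replace (t - e * s - t) with (- (e * s)) in H by ring. lra. }
  split; [|split; [|split]].
  - intros eps Heps.
    assert (E : chi_eps chi g eps = Gm chi eps).
    { apply FunctionalExtensionality.functional_extensionality. intros; apply rep; lra. }
    rewrite E.
    assert (G0 : Gm chi eps 0 = 0) by (rewrite (Gm_lin chi c d); auto; lra).
    assert (GM : forall x y, x <= y -> Gm chi eps x <= Gm chi eps y).
    { intros x y Hxy. apply Gm_le; auto. intros s _. pose proof (SL (x - eps * s) (y - eps * s) ltac:(lra)). lra. }
    split; [|split; [|split; [|split]]].
    + intros x y l _ _ Hl. apply Gm_cvx; auto.
    + intros x y Hxy _. apply GM; auto.
    + intros t Ht. rewrite <- G0. apply GM; auto.
    + exact G0.
    + exists (- (d - eps) / 2). split; [lra|].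
      rewrite (Gm_lin chi c d); auto; try lra. intro C. apply Rmult_integral in C. lra.
  - intros e1 e2 t H1 H2 H3. rewrite !rep by lra. apply Gm_mono_e; auto; lra.
  - intros t. apply filterlim_locally. intros eta.
    destruct (cvx_lip chi t Cx) as [L [HL HLip]].
    assert (Hdel : 0 < Rmin 1 (eta / (L + 1))).
    { apply Rmin_pos; [lra|]. apply Rdiv_lt_0_compat; [apply cond_pos|lra]. }
    exists (mkposreal _ Hdel). intros e He Hpos. simpl in He.
    change (Rabs (e - 0) < Rmin 1 (eta / (L + 1))) in He. rewrite Rminus_0_r in He.
    change (Rabs (chi_eps chi g e t - chi t) < eta).
    rewrite rep by lra. rewrite Rabs_right in He by lra.
    pose proof (Rmin_l 1 (eta / (L + 1))). pose proof (Rmin_r 1 (eta / (L + 1))).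
    assert (B : Rabs (Gm chi e t - chi t) <= L * e).
    { apply Gm_near; auto. intros s Hs.
      eapply Rle_trans; [apply HLip; split; nra|]. 
      replace (t - e * s - t) with (- (e * s)) by ring. rewrite Rabs_Ropp, Rabs_mult.
      rewrite (Rabs_right e) by lra. apply Rmult_le_compat_l; auto.
      assert (Rabs s <= 1) by (apply Rabs_le; lra). nra. }
    apply Rle_lt_trans with (L * e); auto.
    pose proof (cond_pos eta).
    apply Rle_lt_trans with ((L + 1) * e); [nra|].
    replace (pos eta) with ((L + 1) * (eta / (L + 1))) by (field; lra).
    apply Rmult_lt_compat_l; lra.
  - intros eps Heps t. rewrite rep by lra. pose proof (NEAR eps t ltac:(lra)).
    apply Rabs_le_between in H. lra.
Qed.

Lemma le_eps a b K : 0 <= K -> (forall eta, 0 < eta < 1 -> a <= b + K * eta) -> a <= b.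
Proof.
  intros HK H. destruct (Rle_lt_dec a b) as [A|A]; auto. exfalso.
  set (eta := Rmin (1/2) ((a - b) / (2 * (K + 1)))).
  assert (P : 0 < (a - b) / (2 * (K + 1))) by (apply Rdiv_lt_0_compat; lra).
  assert (He : 0 < eta) by (apply Rmin_pos; lra).
  pose proof (Rmin_l (1/2) ((a - b) / (2 * (K + 1)))).
  pose proof (Rmin_r (1/2) ((a - b) / (2 * (K + 1)))). fold eta in H0, H1.
  specialize (H eta ltac:(lra)).
  assert (K * eta <= (K + 1) * ((a - b) / (2 * (K + 1)))) by nra.
  replace ((K + 1) * ((a - b) / (2 * (K + 1)))) with ((a - b) / 2) in H2 by (field; lra).
  lra.
Qed.

Lemma derive_neg (f : R -> R) x d : is_derive f x d -> is_derive (fun y => - f y) x (- d).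
Proof. intros H. apply (@is_derive_opp R_AbsRing R_NormedModule f x d H). Qed.

Section Plus.
Variables (c d M : R) (chi : R -> R).
Hypothesis Hc : 0 < c.
Hypothesis Hd : 0 < d < 1.
Hypothesis HM : 1 <= M.
Hypothesis Hlin : forall t, - d <= t -> chi t = c * t.
Hypothesis HW : Wplus M chi.

Definition phi x := - chi x.

Lemma phi_cvx : cvx phi.
Proof.
  destruct HW as [_ [Hcc _]]. apply glue with (-c) d; [lra| |].
  - intros x y l Hx Hy Hl. unfold phi. pose proof (Hcc x y l Hx Hy Hl). lra.
  - intros t Ht. unfold phi. rewrite Hlin by auto. ring.
Qed.

Lemma chi_cont x : continuous chi x.
Proof.
  apply (continuous_ext (fun y => - phi y)). { intros y; unfold phi; apply Ropp_involutive. }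
  apply (@continuous_opp R_UniformSpace R_AbsRing R_NormedModule). apply cvx_continuous, phi_cvx.
Qed.

Lemma chi_slope_lo x y : x <= y -> c * (y - x) <= chi y - chi x.
Proof.
  intros Hxy. destruct (Req_dec x y) as [->|N]; [lra|].
  set (K := Rabs x + 1).
  assert (Kx : x + K >= 1) by (unfold K; pose proof (Rle_abs (-x)); rewrite Rabs_Ropp in *; lra).
  pose proof (sl_mono phi x y (x + K) (y + K) phi_cvx ltac:(lra) ltac:(lra) ltac:(unfold K; pose proof (Rabs_pos x); lra) ltac:(unfold K; pose proof (Rabs_pos x); lra)) as S.
  unfold sl, phi in S. rewrite !(Hlin (_ + K)) in S by lra.
  replace ((- (c * (y + K)) - - (c * (x + K))) / (y + K - (x + K))) with (- c) in S by (field; lra).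
  apply Rmult_le_compat_r with (r := y - x) in S; [|lra].
  replace ((- chi y - - chi x) / (y - x) * (y - x)) with (chi x - chi y) in S by (field; lra). lra.
Qed.

Definition LIP a := - sl phi (a - 1) a.

Lemma chi_slope_hi a x y : a <= x -> x <= y -> chi y - chi x <= LIP a * (y - x).
Proof.
  intros Hax Hxy. destruct (Req_dec x y) as [->|N]; [lra|].
  pose proof (sl_mono phi (a - 1) a x y phi_cvx ltac:(lra) ltac:(lra) ltac:(lra) ltac:(lra)) as S.
  unfold LIP.
  assert (E : sl phi x y = - ((chi y - chi x) / (y - x))) by (unfold sl, phi; field; lra).
  rewrite E in S. set (q := (chi y - chi x) / (y - x)) in S.
  assert (Eq : chi y - chi x = q * (y - x)) by (unfold q; field; lra).
  rewrite Eq. nra.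
Qed.

Lemma LIP_ge a : c <= LIP a.
Proof.
  pose proof (chi_slope_lo (a - 1) a ltac:(lra)).
  unfold LIP, sl, phi. replace (a - (a - 1)) with 1 by ring.
  replace ((- chi a - - chi (a - 1)) / 1) with (chi (a - 1) - chi a) by field. lra.
Qed.

Lemma chi_neg t : t < 0 -> chi t < 0.
Proof. destruct HW as [_ [_ [_ [_ [H _]]]]]. auto. Qed.

Lemma chi_le0 t : t <= 0 -> chi t <= 0.
Proof. destruct HW as [_ [_ [H _]]]. auto. Qed.

Lemma chord_bound y h : y < 0 -> 0 < h -> chi (y + h) - chi y <= h * (M * (- chi y) / (- y)).
Proof.
  intros Hy Hh. destruct HW as [_ [_ [_ [_ [_ Hder]]]]].
  set (L := LIP (y - 1)). pose proof (LIP_ge (y - 1)) as HL. fold L in HL.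
  set (S := (chi (y + h) - chi y) / h).
  assert (Sdef : chi (y + h) - chi y = h * S) by (unfold S; field; lra).
  rewrite Sdef. apply Rmult_le_compat_l; [lra|].
  apply le_eps with (M * L / (- y)).
  { apply Rmult_le_pos; [nra|]. apply Rlt_le, Rinv_0_lt_compat; lra. }
  intros eta Heta.
  destruct (cvx_diff_point phi (y - eta) y phi_cvx ltac:(lra)) as [z [D [Hz HD]]].
  assert (HDc : is_derive chi z (- D)).
  { apply (is_derive_ext (fun x => - phi x)). { intros; unfold phi; apply Ropp_involutive. } apply derive_neg; auto. }
  pose proof (Hder z (- D) ltac:(lra) HDc) as HB.
  pose proof (cvx_deriv_chord phi z D (y - z) phi_cvx HD ltac:(lra)) as [_ HD2].
  replace (z + (y - z)) with y in HD2 by ring.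
  pose proof (sl_mono phi z y y (y + h) phi_cvx ltac:(lra) ltac:(lra) ltac:(lra) ltac:(lra)) as HS.
  assert (ES : sl phi y (y + h) = - S) by (unfold sl, phi, S; field; lra).
  rewrite ES in HS.
  assert (Sc : c <= S).
  { pose proof (chi_slope_lo y (y + h) ltac:(lra)). unfold S.
    apply Rmult_le_reg_r with h; [lra|]. replace ((chi (y + h) - chi y) / h * h) with (chi (y + h) - chi y) by (field; lra). nra. }
  pose proof (chi_neg z ltac:(lra)) as Hcz.
  rewrite Rabs_mult, (Rabs_left z), (Rabs_left (chi z)), (Rabs_right (- D)) in HB by lra.
  (* S <= -D <= M (-chi z) / (-z) *)
  assert (B1 : S * (- z) <= M * (- chi z)) by nra.
  pose proof (chi_slope_hi (y - 1) z y ltac:(lra) ltac:(lra)) as HL2. fold L in HL2.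
  assert (B2 : - chi z <= - chi y + L * eta) by nra.
  assert (B3 : S * (- y) <= M * (- chi y) + M * L * eta).
  { assert (S * (- y) <= S * (- z)) by nra. nra. }
  apply Rmult_le_reg_r with (- y); [lra|].
  replace ((M * - chi y / - y + M * L / - y * eta) * - y) with (M * (- chi y) + M * L * eta) by (field; lra).
  lra.
Qed.

Lemma phi_cont x : continuous phi x.
Proof. apply cvx_continuous, phi_cvx. Qed.

Lemma G_inc e x y : x <= y -> c * (y - x) <= Gm chi e y - Gm chi e x.
Proof.
  intros H. apply Gm_diff_ge; [apply chi_cont|]. intros s _.
  pose proof (chi_slope_lo (x - e * s) (y - e * s) ltac:(lra)).
  replace (y - e * s - (x - e * s)) with (y - x) in H0 by ring. lra.
Qed.

Lemma G_lin e t : 0 <= e -> - d <= t - e -> Gm chi e t = c * t.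
Proof. intros. apply Gm_lin with d; auto. Qed.

Lemma G_opp e x : - Gm chi e x = Gm phi e x.
Proof.
  rewrite (Gm_ext phi (fun y => - chi y)) by (intros; unfold phi; reflexivity).
  rewrite Gm_opp by apply chi_cont. reflexivity.
Qed.

Lemma G_cvx e : cvx (fun x => - Gm chi e x).
Proof.
  intros x y l Hl. rewrite !G_opp. apply Gm_cvx; auto. apply phi_cont. apply phi_cvx.
Qed.

Lemma G_deriv_neg e t d' : is_derive (Gm chi e) t d' -> is_derive (fun x => - Gm chi e x) t (- d').
Proof. apply derive_neg. Qed.

Lemma G_deriv_pos e t d' : is_derive (Gm chi e) t d' -> c <= d'.
Proof.
  intros H. pose proof (cvx_deriv_chord _ t (- d') 1 (G_cvx e) (G_deriv_neg e t d' H) ltac:(lra)) as [_ B].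
  pose proof (G_inc e t (t + 1) ltac:(lra)). unfold sl in B.
  replace (t + 1 - t) with 1 in B by ring. replace (t + 1 - t) with 1 in H0 by ring.
  unfold Rdiv in B. rewrite Rinv_1, Rmult_1_r in B. lra.
Qed.

Lemma G_deriv_c e t d' : 0 <= e -> - d < t - e -> is_derive (Gm chi e) t d' -> d' = c.
Proof.
  intros He Ht H.
  set (h := (t - e + d) / 2).
  pose proof (cvx_deriv_chord _ t (- d') h (G_cvx e) (G_deriv_neg e t d' H) ltac:(unfold h; lra)) as [A B].
  unfold sl in A, B. rewrite !(G_lin e) in A, B by (unfold h; lra).
  replace ((- (c * t) - - (c * (t - h))) / (t - (t - h))) with (- c) in A by (field; unfold h; lra).
  replace ((- (c * (t + h)) - - (c * t)) / (t + h - t)) with (- c) in B by (field; unfold h; lra).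
  lra.
Qed.

Lemma G4 e t d' : 0 < e -> t < 0 -> e < - t -> is_derive (Gm chi e) t d' ->
  d' * (- t - e) <= M * (- Gm chi e t).
Proof.
  intros He Ht Het H.
  set (L := LIP (t - 1 - e)). pose proof (LIP_ge (t - 1 - e)) as HL. fold L in HL.
  pose proof (G_deriv_pos e t d' H) as Hdp.
  apply le_eps with (M * L); [nra|].
  intros h [h0 h1].
  pose proof (cvx_deriv_chord _ t (- d') h (G_cvx e) (G_deriv_neg e t d' H) h0) as [A _].
  unfold sl in A. replace (t - (t - h)) with h in A by ring.
  assert (A2 : d' * h <= Gm chi e t - Gm chi e (t - h)).
  { apply Rmult_le_compat_r with (r := h) in A; [|lra].
    replace ((- Gm chi e t - - Gm chi e (t - h)) / h * h) with (- (Gm chi e t - Gm chi e (t - h))) in A by (field; lra).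
    lra. }
  set (A0 := h * M / (- t + h - e)).
  assert (HA0 : 0 <= A0) by (unfold A0; apply Rmult_le_pos; [nra|apply Rlt_le, Rinv_0_lt_compat; lra]).
  assert (U : Gm chi e t - Gm chi e (t - h) <= A0 * (- Gm chi e (t - h))).
  { unfold Gm.
    replace (A0 * - Ig (fun s => chi (t - h - e * s))) with
      (Ig (fun s => (- A0) * chi (t - h - e * s) + 0 * chi (t - h - e * s))).
    2:{ rewrite Ig_lin by (intros; apply cont_lin, chi_cont). ring. }
    apply Ig_sub_le.
    - intros; apply cont_lin, chi_cont.
    - intros; apply cont_lin, chi_cont.
    - intros; apply cont_comb; apply cont_lin, chi_cont.
    - intros s Hs. set (y := t - h - e * s).
      assert (Hy : - y >= - t + h - e) by (unfold y; nra).
      pose proof (chord_bound y h ltac:(lra) h0) as CB.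
      replace (y + h) with (t - e * s) in CB by (unfold y; ring).
      pose proof (chi_le0 y ltac:(lra)).
      assert (M * - chi y / - y <= M * - chi y / (- t + h - e)).
      { unfold Rdiv. apply Rmult_le_compat_l; [nra|]. apply Rinv_le_contravar; lra. }
      assert (h * (M * - chi y / - y) <= A0 * - chi y).
      { unfold A0. replace (h * M / (- t + h - e) * - chi y) with (h * (M * - chi y / (- t + h - e))) by (field; lra).
        apply Rmult_le_compat_l; lra. }
      lra. }
  assert (Lp : Gm chi e t - Gm chi e (t - h) <= L * h).
  { apply Gm_diff_le; [apply chi_cont|]. intros s Hs.
    pose proof (chi_slope_hi (t - 1 - e) (t - h - e * s) (t - e * s) ltac:(nra) ltac:(lra)).
    fold L in H0. replace (t - e * s - (t - h - e * s)) with h in H0 by ring. lra. }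
  assert (B : d' * (- t + h - e) <= M * (- Gm chi e (t - h))).
  { assert (d' * h <= A0 * - Gm chi e (t - h)) by lra.
    unfold A0 in H0.
    apply Rmult_le_compat_r with (r := (- t + h - e) / h) in H0; [|apply Rdiv_le_0_compat; lra].
    replace (d' * h * ((- t + h - e) / h)) with (d' * (- t + h - e)) in H0 by (field; lra).
    replace (h * M / (- t + h - e) * - Gm chi e (t - h) * ((- t + h - e) / h)) with (M * - Gm chi e (t - h)) in H0 by (field; lra).
    exact H0. }
  nra.
Qed.

Lemma chi_lip2 a x y : a <= x -> a <= y -> Rabs (chi y - chi x) <= LIP a * Rabs (y - x).
Proof.
  intros Hx Hy. pose proof (LIP_ge a).
  destruct (Rle_lt_dec x y) as [Hxy|Hxy].
  - pose proof (chi_slope_hi a x y Hx Hxy). pose proof (chi_slope_lo x y Hxy).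
    rewrite !Rabs_right by nra. lra.
  - pose proof (chi_slope_hi a y x Hy ltac:(lra)). pose proof (chi_slope_lo y x ltac:(lra)).
    rewrite Rabs_left1 by nra. rewrite (Rabs_left1 (y - x)) by lra. lra.
Qed.

Lemma part_ii :
     (forall eps, 0 < eps < d ^ 2 / 2 -> Wplus (M / (1 - d)) (chi_eps chi g eps)) /\
     (forall eps, 0 < eps < d ^ 2 / 8 ->
        Wplus (M / (1 - d) ^ 2) (chibar_eps chi g c eps) /\
        (forall t, chi t - c * eps <= chibar_eps chi g c eps t)) /\
     (forall a b eta, 0 < eta -> exists e0, 0 < e0 /\
        forall eps, 0 < eps < e0 -> forall t, a <= t <= b ->
          Rabs (chibar_eps chi g c eps t - chi t) < eta).
Proof.
  assert (rep : forall e, 0 < e -> chi_eps chi g e = Gm chi e).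
  { intros e He. apply FunctionalExtensionality.functional_extensionality. intros t.
    apply Gm_rep; auto. apply chi_cont. }
  assert (repb : forall e, 0 < e -> chibar_eps chi g c e = fun t => Gm chi e (t + e) - c * e).
  { intros e He. apply FunctionalExtensionality.functional_extensionality. intros t.
    unfold chibar_eps. rewrite rep by auto. reflexivity. }
  assert (Hd2 : d ^ 2 < d) by (simpl; nra).
  split; [|split].
  - intros eps Heps. rewrite rep by lra.
    assert (K1 : 1 <= M / (1 - d)).
    { apply Rmult_le_reg_r with (1 - d); [lra|]. unfold Rdiv. rewrite Rmult_assoc, Rinv_l by lra. nra. }
    assert (G0 : Gm chi eps 0 = 0) by (rewrite G_lin; lra).
    split; [|split; [|split; [|split; [|split]]]].
    + intros x y Hxy _. pose proof (G_inc eps x y ltac:(lra)). nra.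
    + intros x y l _ _ Hl. pose proof (G_cvx eps x y l Hl). cbv beta in H. lra.
    + intros t Ht. pose proof (G_inc eps t 0 Ht). nra.
    + exact G0.
    + intros t Ht. pose proof (G_inc eps t 0 ltac:(lra)). nra.
    + intros t d' Ht H.
      assert (Gneg : Gm chi eps t < 0) by (pose proof (G_inc eps t 0 ltac:(lra)); nra).
      pose proof (G_deriv_pos eps t d' H) as Hdp.
      destruct (Rlt_le_dec (- d) (t - eps)) as [C|C].
      * pose proof (G_deriv_c eps t d' ltac:(lra) C H) as ->.
        rewrite G_lin by lra. rewrite Rabs_mult, (Rabs_mult c), (Rmult_comm (Rabs t)).
        pose proof (Rabs_pos c). pose proof (Rabs_pos t). 
        rewrite <- Rmult_1_l at 1. apply Rmult_le_compat_r; [nra|lra].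
      * pose proof (G4 eps t d' ltac:(lra) ltac:(lra) ltac:(nra) H) as B.
        rewrite Rabs_mult, (Rabs_left t), (Rabs_right d'), (Rabs_left (Gm chi eps t)) by lra.
        assert (Q : (- t) * (1 - d) <= - t - eps) by nra.
        apply Rmult_le_reg_r with (1 - d); [lra|].
        replace (M / (1 - d) * - Gm chi eps t * (1 - d)) with (M * - Gm chi eps t) by (field; lra).
        nra.
  - intros eps Heps. rewrite repb by lra.
    assert (Hd8 : eps < d / 8) by nra.
    assert (K1 : 1 <= M / (1 - d) ^ 2).
    { assert (0 < (1 - d) ^ 2) by (apply pow_lt; lra).
      assert ((1 - d) ^ 2 <= 1) by (simpl; nra).
      apply Rmult_le_reg_r with ((1 - d) ^ 2); [lra|]. unfold Rdiv. rewrite Rmult_assoc, Rinv_l by lra. nra. }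
    assert (G0 : Gm chi eps (0 + eps) - c * eps = 0) by (rewrite G_lin; lra).
    split; [split; [|split; [|split; [|split; [|split]]]]|].
    + intros x y Hxy _. pose proof (G_inc eps (x + eps) (y + eps) ltac:(lra)). nra.
    + intros x y l _ _ Hl. pose proof (G_cvx eps (x + eps) (y + eps) l Hl). cbv beta in H.
      replace (l * (x + eps) + (1 - l) * (y + eps)) with (l * x + (1 - l) * y + eps) in H by ring. lra.
    + intros t Ht. pose proof (G_inc eps (t + eps) (0 + eps) ltac:(lra)). nra.
    + exact G0.
    + intros t Ht. pose proof (G_inc eps (t + eps) (0 + eps) ltac:(lra)). nra.
    + intros t d' Ht H.
      assert (H' : is_derive (Gm chi eps) (t + eps) d').
      { apply is_derive_Reals in H. apply is_derive_Reals. intros ep Hep.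
        destruct (H ep Hep) as [del Hdel]. exists del. intros h Hh0 Hh.
        specialize (Hdel h Hh0 Hh).
        replace ((Gm chi eps (t + eps + h) - Gm chi eps (t + eps)) / h) with
          ((Gm chi eps (t + h + eps) - c * eps - (Gm chi eps (t + eps) - c * eps)) / h).
        exact Hdel. replace (t + h + eps) with (t + eps + h) by ring. field. auto. }
      assert (Gneg : Gm chi eps (t + eps) - c * eps < 0) by (pose proof (G_inc eps (t + eps) (0 + eps) ltac:(lra)); nra).
      pose proof (G_deriv_pos eps (t + eps) d' H') as Hdp.
      destruct (Rlt_le_dec (- d) t) as [C|C].
      * pose proof (G_deriv_c eps (t + eps) d' ltac:(lra) ltac:(lra) H') as ->.
        rewrite G_lin by lra. replace (c * (t + eps) - c * eps) with (c * t) by ring.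
        rewrite Rabs_mult, (Rabs_mult c), (Rmult_comm (Rabs t)).
        pose proof (Rabs_pos c). pose proof (Rabs_pos t). 
        rewrite <- Rmult_1_l at 1. apply Rmult_le_compat_r; [nra|lra].
      * pose proof (G4 eps (t + eps) d' ltac:(lra) ltac:(lra) ltac:(nra) H') as B.
        rewrite Rabs_mult, (Rabs_left t), (Rabs_right d'), (Rabs_left (_ - _)) by lra.
        assert (P : 0 < (1 - d) ^ 2) by (apply pow_lt; lra).
        assert (Q : (- t) * (1 - d) ^ 2 <= - (t + eps) - eps).
        { simpl. rewrite Rmult_1_r. nra. }
        apply Rmult_le_reg_r with ((1 - d) ^ 2); [lra|].
        replace (M / (1 - d) ^ 2 * - (Gm chi eps (t + eps) - c * eps) * (1 - d) ^ 2)
          with (M * - (Gm chi eps (t + eps) - c * eps)) by (field; lra).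
        assert (d' * (- t * (1 - d) ^ 2) <= d' * (- (t + eps) - eps)) by (apply Rmult_le_compat_l; lra).
        assert (M * - Gm chi eps (t + eps) <= M * - (Gm chi eps (t + eps) - c * eps)).
        { apply Rmult_le_compat_l; [lra|]. nra. }
        replace (- t * d' * (1 - d) ^ 2) with (d' * (- t * (1 - d) ^ 2)) by ring.
        lra.
    + intros t. cbv beta.
      assert (chi t <= Gm chi eps (t + eps)).
      { unfold Gm. rewrite <- (Ig_const (chi t)). apply Ig_le.
        - intros; apply continuous_const.
        - intros; apply cont_lin, chi_cont.
        - intros s Hs. pose proof (chi_slope_lo t (t + eps - eps * s) ltac:(nra)).
          assert (0 <= c * (t + eps - eps * s - t)) by (apply Rmult_le_pos; nra). lra. }
      lra.
  - intros a b eta Heta.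
    set (L := LIP (a - 2)). pose proof (LIP_ge (a - 2)) as HL. fold L in HL.
    set (e0 := Rmin 1 (eta / (2 * L + c + 1))).
    assert (He0 : 0 < e0) by (apply Rmin_pos; [lra|apply Rdiv_lt_0_compat; lra]).
    exists e0. split; auto. intros eps Heps t Ht.
    pose proof (Rmin_l 1 (eta / (2 * L + c + 1))). pose proof (Rmin_r 1 (eta / (2 * L + c + 1))).
    fold e0 in H, H0.
    rewrite repb by lra. cbv beta.
    assert (N1 : Rabs (Gm chi eps (t + eps) - chi (t + eps)) <= L * eps).
    { apply Gm_near; [apply chi_cont|]. intros s Hs.
      pose proof (chi_lip2 (a - 2) (t + eps) (t + eps - eps * s) ltac:(lra) ltac:(nra)). fold L in H1.
      replace (t + eps - eps * s - (t + eps)) with (- (eps * s)) in H1 by ring.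
      rewrite Rabs_Ropp, Rabs_mult, (Rabs_right eps) in H1 by lra.
      assert (Rabs s <= 1) by (apply Rabs_le; lra).
      assert (L * (eps * Rabs s) <= L * eps) by (apply Rmult_le_compat_l; nra). lra. }
    assert (N2 : Rabs (chi (t + eps) - chi t) <= L * eps).
    { pose proof (chi_lip2 (a - 2) t (t + eps) ltac:(lra) ltac:(lra)). fold L in H1.
      replace (t + eps - t) with eps in H1 by ring. rewrite (Rabs_right eps) in H1 by lra. lra. }
    apply Rabs_le_between in N1. apply Rabs_le_between in N2.
    assert (B : Rabs (Gm chi eps (t + eps) - c * eps - chi t) <= (2 * L + c) * eps).
    { apply Rabs_le. nra. }
    apply Rle_lt_trans with ((2 * L + c) * eps); auto.
    apply Rlt_le_trans with ((2 * L + c + 1) * e0).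
    + nra.
    + replace eta with ((2 * L + c + 1) * (eta / (2 * L + c + 1))) by (field; lra).
      apply Rmult_le_compat_l; lra.
Qed.

End Plus.
End G.

Theorem lemma2p5 (c delta M : R) (chi g : R -> R)
  (hc : 0 < c) (hd : 0 < delta < 1) (hM : 1 <= M)
  (hlin : forall t, - delta <= t -> chi t = c * t)
  (hclass : Wminus_tilde chi \/ Wplus M chi)
  (hsmooth : forall n x, ex_derive_n g n x)
  (hsupp : forall t, (t < -1 \/ 1 < t) -> g t = 0)
  (hsym : forall t, g t = g (- t))
  (hbnd : forall t, 0 <= g t <= 1)
  (hint : is_RInt_gen g (Rbar_locally m_infty) (Rbar_locally p_infty) 1) :
  (Wminus_tilde chi ->
     (forall eps, 0 < eps < delta -> Wminus_tilde (chi_eps chi g eps)) /\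
     (forall e1 e2 t, 0 < e1 -> e1 <= e2 -> e2 < delta ->
        chi_eps chi g e1 t <= chi_eps chi g e2 t) /\
     (forall t, filterlim (fun eps => chi_eps chi g eps t) (at_right 0) (locally (chi t))) /\
     (forall eps, 0 < eps < delta -> forall t, chi_eps chi g eps t - chi t <= c * eps)) /\
  (Wplus M chi ->
     (forall eps, 0 < eps < delta ^ 2 / 2 ->
        Wplus (M / (1 - delta)) (chi_eps chi g eps)) /\
     (forall eps, 0 < eps < delta ^ 2 / 8 ->
        Wplus (M / (1 - delta) ^ 2) (chibar_eps chi g c eps) /\
        (forall t, chi t - c * eps <= chibar_eps chi g c eps t)) /\
     (forall a b eta, 0 < eta -> exists e0, 0 < e0 /\
        forall eps, 0 < eps < e0 -> forall t, a <= t <= b ->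
          Rabs (chibar_eps chi g c eps t - chi t) < eta)).
Proof.
  assert (gcont : forall x, continuous g x).
  { intros x. apply (@ex_derive_continuous R_AbsRing R_NormedModule). exact (hsmooth 1%nat x). }
  assert (gpos : forall t, 0 <= g t) by (intros t; apply hbnd).
  assert (gint : RInt g (-1) 1 = 1).
  { pose proof (is_RInt_gen_cpt g 1 ltac:(lra) gcont hsupp) as H1.
    pose proof (@is_RInt_gen_unique R_CompleteNormedModule (Rbar_locally m_infty) (Rbar_locally p_infty) _ _ g _ H1) as A1.
    pose proof (@is_RInt_gen_unique R_CompleteNormedModule (Rbar_locally m_infty) (Rbar_locally p_infty) _ _ g _ hint) as A2.
    replace (- (1)) with (-1) in A1 by ring. rewrite <- A1. exact A2. }
  split.
  - intros HW. exact (part_i g gcont hsupp hsym gpos gint c delta chi hc hd hlin HW).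
  - intros HW. exact (part_ii g gcont hsupp hsym gpos gint c delta M chi hc hd hM hlin HW).
Qed.
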